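(* Let $d\geq 1$, let $\mathcal S=\{\sigma\in L(\mathbb C^d):\sigma\geq 0,\ \mathrm{Tr}(\sigma)=1\}$, and let $\mathrm d\rho$ be any probability measure on $\mathcal S$. Then $$\max_{\sigma\in\mathcal S}\mathbb E_\rho[F(\rho,\sigma)]\leq 1-\tfrac14\,\mathrm{Tr}\big(\mathbb E_\rho[\rho^2]-\mathbb E_\rho[\rho]^2\big).$$
   Context: The fidelity of $\rho,\sigma\in\mathcal S$ is $F(\rho,\sigma)=\big[\mathrm{Tr}\sqrt{\sqrt\rho\,\sigma\sqrt\rho}\big]^2$. $\mathbb E_\rho$ denotes expectation with respect to $\mathrm d\rho$. *)

(* Defs.v *)
From HB Require Import structures.
From mathcomp Require Import all_boot all_order all_algebra.
From mathcomp Require Import complex.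
From mathcomp Require Import all_classical all_reals all_analysis.
Set Implicit Arguments. Unset Strict Implicit. Unset Printing Implicit Defensive.
Import Order.TTheory GRing.Theory Num.Theory.
Local Open Scope ring_scope.
Local Open Scope classical_set_scope.

Section QDefs.
Variable R : realType.
Local Notation C := R[i].

Definition adjmx m n (M : 'M[C]_(m, n)) : 'M[C]_(n, m) := (map_mx Num.conj M)^T.

Definition psdmx n (M : 'M[C]_n) : Prop :=
  adjmx M = M /\ forall v : 'rV[C]_n, 0 <= (v *m M *m adjmx v) 0 0.

Definition densitymx n (M : 'M[C]_n) : Prop := psdmx M /\ \tr M = 1.

Definition sqrtmx n (M : 'M[C]_n) : 'M[C]_n :=
  xget 0 [set X : 'M[C]_n | psdmx X /\ X *m X = M].

(* fidelity F(rho,sigma) = (Tr sqrt(sqrt rho sigma sqrt rho))^2  (the trace is real) *)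
Definition fidelity n (rho sigma : 'M[C]_n) : R :=
  (complex.Re (\tr (sqrtmx (sqrtmx rho *m sigma *m sqrtmx rho)))) ^+ 2.

Definition Emx (dT : measure_display) (T : measurableType dT)
  (P : probability T R) n (X : T -> 'M[C]_n) : 'M[C]_n :=
  \matrix_(i, j) Complex (Rintegral P setT (fun w => complex.Re (X w i j)))
                         (Rintegral P setT (fun w => complex.Im (X w i j))).

Definition random_density (dT : measure_display) (T : measurableType dT) n
  (rho : T -> 'M[C]_n) : Prop :=
  (forall w, densitymx (rho w)) /\
  (forall i j, measurable_fun setT (fun w => complex.Re (rho w i j)) /\
               measurable_fun setT (fun w => complex.Im (rho w i j))).
End QDefs.

(* Main.v *)
Require Import Defs.
From HB Require Import structures.
From mathcomp Require Import all_boot all_order all_algebra.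
From mathcomp Require Import complex.
From mathcomp Require Import all_classical all_reals all_analysis.
From mathcomp Require Import ring lra.
Import Order.TTheory GRing.Theory Num.Theory.
Local Open Scope ring_scope.
Local Open Scope classical_set_scope.

Module MatM.
Local Set Implicit Arguments. Local Unset Strict Implicit.
Local Open Scope complex_scope.
Section Mat.
Variable R : realType.
Local Notation C := R[i].
Local Notation Re := complex.Re.
Local Notation Im := complex.Im.
Implicit Types z w : C.

Lemma cReM z w : Re (z * w) = Re z * Re w - Im z * Im w.
Proof. by case: z => a b; case: w => c d. Qed.
Lemma cImM z w : Im (z * w) = Re z * Im w + Im z * Re w.
Proof. by case: z => a b; case: w => c d. Qed.
Lemma cReD z w : Re (z + w) = Re z + Re w.
Proof. by case: z => a b; case: w => c d. Qed.
Lemma cImD z w : Im (z + w) = Im z + Im w.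
Proof. by case: z => a b; case: w => c d. Qed.
Lemma cReJ z : Re (Num.conj z) = Re z.
Proof. by case: z. Qed.
Lemma cImJ z : Im (Num.conj z) = - Im z.
Proof. by case: z. Qed.
Lemma cReN z : Re (- z) = - Re z.
Proof. by case: z. Qed.
Lemma cImN z : Im (- z) = - Im z.
Proof. by case: z. Qed.
Lemma cReB z w : Re (z - w) = Re z - Re w.
Proof. by rewrite cReD cReN. Qed.
Lemma cImB z w : Im (z - w) = Im z - Im w.
Proof. by rewrite cImD cImN. Qed.
Lemma cRe0 : Re (0 : C) = 0. Proof. by []. Qed.
Lemma cIm0 : Im (0 : C) = 0. Proof. by []. Qed.
Lemma cRe1 : Re (1 : C) = 1. Proof. by []. Qed.
Lemma cIm1 : Im (1 : C) = 0. Proof. by []. Qed.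
Lemma cReR (x : R) : Re (x%:C) = x. Proof. by []. Qed.
Lemma cImR (x : R) : Im (x%:C) = 0. Proof. by []. Qed.
Lemma cRe_sum I (r : seq I) (P : pred I) (F : I -> C) :
  Re (\sum_(i <- r | P i) F i) = \sum_(i <- r | P i) Re (F i).
Proof. exact: (big_morph _ cReD). Qed.
Lemma cIm_sum I (r : seq I) (P : pred I) (F : I -> C) :
  Im (\sum_(i <- r | P i) F i) = \sum_(i <- r | P i) Im (F i).
Proof. exact: (big_morph _ cImD). Qed.
Lemma cJJ z : Num.conj (Num.conj z) = z.
Proof. exact: conjCK. Qed.
Lemma cJM z w : Num.conj (z * w) = Num.conj z * Num.conj w.
Proof. exact: rmorphM. Qed.
Lemma cJD z w : Num.conj (z + w) = Num.conj z + Num.conj w.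
Proof. exact: rmorphD. Qed.

Lemma ceqP z w : Re z = Re w -> Im z = Im w -> z = w.
Proof. by case: z => a b; case: w => c d /= -> ->. Qed.

Definition nrm2 z : R := Re z ^+ 2 + Im z ^+ 2.
Lemma nrm2_ge0 z : 0 <= nrm2 z.
Proof. by rewrite /nrm2 addr_ge0 // sqr_ge0. Qed.
Lemma nrm2J z : nrm2 (Num.conj z) = nrm2 z.
Proof. by rewrite /nrm2 cReJ cImJ sqrrN. Qed.
Lemma nrm2N z : nrm2 (- z) = nrm2 z.
Proof. by rewrite /nrm2 cReN cImN !sqrrN. Qed.
Lemma mulJ z : z * Num.conj z = (nrm2 z)%:C.
Proof. apply: ceqP; rewrite ?cReM ?cImM ?cReJ ?cImJ /nrm2 /=; ring. Qed.
Lemma normc2 z : `|z| ^+ 2 = (nrm2 z)%:C.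
Proof. by rewrite -add_Re2_Im2. Qed.
Lemma lecR' (x y : R) : ((x%:C : C) <= y%:C) = (x <= y).
Proof. by rewrite lecR. Qed.
Lemma mulcR (x y : R) : (x%:C * y%:C : C) = (x * y)%:C.
Proof. apply: ceqP; rewrite ?cReM ?cImM /=; ring. Qed.
Lemma sumcR I (r : seq I) (P : pred I) (F : I -> R) :
  (\sum_(i <- r | P i) F i)%:C = \sum_(i <- r | P i) (F i)%:C :> C.
Proof. apply: ceqP; rewrite ?cRe_sum ?cIm_sum /=; [done| by rewrite big1]. Qed.

Lemma cs k (u v : 'I_k -> C) :
  nrm2 (\sum_l u l * Num.conj (v l)) <=
  (\sum_l nrm2 (u l)) * (\sum_l nrm2 (v l)).
Proof.
pose u' : 'rV[C]_k := \row_l u l; pose v' : 'rV[C]_k := \row_l v l.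
have E (x y : 'rV[C]_k) : @dotmx C k x y = \sum_l x 0 l * Num.conj (y 0 l).
  by rewrite dotmxE mxE; apply: eq_bigr => l _; rewrite !mxE.
have : `|\sum_l u' 0 l * Num.conj (v' 0 l)| ^+ 2 <=
   (\sum_l u' 0 l * Num.conj (u' 0 l)) * (\sum_l v' 0 l * Num.conj (v' 0 l)).
  rewrite -!E; exact: (@CauchySchwarz C _ (@dotmx C k) u' v').1.
rewrite normc2.
under eq_bigr do rewrite !mxE.
under [X in _ <= X * _]eq_bigr do rewrite !mxE mulJ.
under [X in _ <= _ * X]eq_bigr do rewrite !mxE mulJ.
by rewrite -!sumcR mulcR lecR'.
Qed.


Definition frob m k (M : 'M[C]_(m, k)) : R := \sum_i \sum_j nrm2 (M i j).
Definition ipm m k (X Y : 'M[C]_(m, k)) : R :=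
  \sum_i \sum_j (Re (X i j) * Re (Y i j) + Im (X i j) * Im (Y i j)).

Lemma adjE m k (M : 'M[C]_(m, k)) i j : adjmx M i j = Num.conj (M j i).
Proof. by rewrite !mxE. Qed.
Lemma adjmxD m k (A B : 'M[C]_(m, k)) : adjmx (A + B) = adjmx A + adjmx B.
Proof. by apply/matrixP => i j; rewrite !mxE rmorphD. Qed.
Lemma adjmxN m k (A : 'M[C]_(m, k)) : adjmx (- A) = - adjmx A.
Proof. by apply/matrixP => i j; rewrite !mxE rmorphN. Qed.
Lemma adjmxB m k (A B : 'M[C]_(m, k)) : adjmx (A - B) = adjmx A - adjmx B.
Proof. by rewrite adjmxD adjmxN. Qed.
Lemma adjmxM m k l (A : 'M[C]_(m, k)) (B : 'M[C]_(k, l)) :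
  adjmx (A *m B) = adjmx B *m adjmx A.
Proof.
apply/matrixP => i j; rewrite !mxE rmorph_sum; apply: eq_bigr => r _.
by rewrite !mxE rmorphM mulrC.
Qed.
Lemma adjmxK m k (A : 'M[C]_(m, k)) : adjmx (adjmx A) = A.
Proof. by apply/matrixP => i j; rewrite !mxE conjCK. Qed.

Lemma frob_ge0 m k (M : 'M[C]_(m, k)) : 0 <= frob M.
Proof. by apply: sumr_ge0 => i _; apply: sumr_ge0 => j _; apply: nrm2_ge0. Qed.

Lemma frobD m k (X Y : 'M[C]_(m, k)) :
  frob (X + Y) = frob X + frob Y + 2 * ipm X Y.
Proof.
rewrite /frob /ipm mulr_sumr -!big_split /=; apply: eq_bigr => i _.
rewrite mulr_sumr -!big_split /=; apply: eq_bigr => j _.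
rewrite !mxE /nrm2 cReD cImD; ring.
Qed.

Lemma ipmN m k (X Y : 'M[C]_(m, k)) : ipm X (- Y) = - ipm X Y.
Proof.
rewrite /ipm -sumrN; apply: eq_bigr => i _; rewrite -sumrN; apply: eq_bigr => j _.
rewrite !mxE cReN cImN; ring.
Qed.

Lemma ipmxx m k (X : 'M[C]_(m, k)) : ipm X X = frob X.
Proof. by apply: eq_bigr => i _; apply: eq_bigr => j _; rewrite /nrm2 !expr2. Qed.

Lemma frob_le2 m k (X Y : 'M[C]_(m, k)) : frob (X + Y) <= 2 * frob X + 2 * frob Y.
Proof.
rewrite /frob !mulr_sumr -big_split /=; apply: ler_sum => i _.
rewrite !mulr_sumr -big_split /=; apply: ler_sum => j _.
rewrite !mxE /nrm2 cReD cImD.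
set a := Re (X i j); set b := Re (Y i j); set c := Im (X i j); set d := Im (Y i j).
have := sqr_ge0 (a - b); have := sqr_ge0 (c - d); clearbody a b c d; nra.
Qed.

Lemma frob_adj m k (M : 'M[C]_(m, k)) : frob (adjmx M) = frob M.
Proof.
rewrite /frob exchange_big /=; apply: eq_bigr => i _; apply: eq_bigr => j _.
by rewrite !mxE nrm2J.
Qed.

Lemma frobM m k l (M : 'M[C]_(m, k)) (N : 'M[C]_(k, l)) :
  frob (M *m N) <= frob M * frob N.
Proof.
rewrite /frob [X in _ <= _ * X]exchange_big /= mulr_suml; apply: ler_sum => i _.
rewrite mulr_sumr; apply: ler_sum => j _.
rewrite mxE.
have -> : \sum_k0 nrm2 (N k0 j) = \sum_k0 nrm2 (Num.conj (N k0 j)).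
  by apply: eq_bigr => r _; rewrite nrm2J.
rewrite (eq_bigr (fun r => M i r * Num.conj (Num.conj (N r j)))); last first.
  by move=> r _; rewrite conjCK.
exact: cs.
Qed.

Lemma tr_adjM m (X Y : 'M[C]_m) : Re (\tr (adjmx X *m Y)) = ipm X Y.
Proof.
rewrite /ipm /mxtrace cRe_sum exchange_big /=; apply: eq_bigr => i _.
rewrite mxE cRe_sum; apply: eq_bigr => j _.
rewrite !mxE cReM cReJ cImJ; ring.
Qed.


Lemma zid (V : zmodType) (p q r s : V) :
  (p - q + (r - s)) + (p + q + (- r - s)) = (p - s) + (p - s).
Proof.
rewrite -opprD.
rewrite addrACA (addrACA p) addNr addr0 [RHS]addrACA; congr (_ + _).
by rewrite opprD addrACA subrr add0r.
Qed.

Lemma frobN m k (X : 'M[C]_(m, k)) : frob (- X) = frob X.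
Proof. by apply: eq_bigr => i _; apply: eq_bigr => j _; rewrite mxE nrm2N. Qed.

Lemma frob_gram_diff n (X Y : 'M[C]_n) :
  frob (adjmx X *m X - adjmx Y *m Y) <=
  (frob X + frob Y + 2 * ipm X Y) * (frob X + frob Y - 2 * ipm X Y).
Proof.
set M := adjmx X *m X - adjmx Y *m Y.
have E : adjmx (X + Y) *m (X - Y) + adjmx (X - Y) *m (X + Y) = M + M.
  by rewrite adjmxD adjmxB !(mulmxDl, mulmxDr, mulmxBl, mulmxBr) !(mulmxN, mulNmx) zid.
have h4 : frob (M + M) = 4 * frob M.
  by rewrite frobD ipmxx; ring.
have hS : frob (X + Y) = frob X + frob Y + 2 * ipm X Y by rewrite frobD.
have hD : frob (X - Y) = frob X + frob Y - 2 * ipm X Y.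
  by rewrite frobD frobN ipmN; ring.
have h1 := frob_le2 (adjmx (X + Y) *m (X - Y)) (adjmx (X - Y) *m (X + Y)).
have h2 := frobM (adjmx (X + Y)) (X - Y).
have h3 := frobM (adjmx (X - Y)) (X + Y).
rewrite !frob_adj hS hD in h2 h3.
rewrite E h4 in h1.
set a := frob X + frob Y + 2 * ipm X Y in h2 h3 *.
set b := frob X + frob Y - 2 * ipm X Y in h2 h3 *.
clearbody a b; lra.
Qed.


Lemma gramE n k (W : 'M[C]_(n, k)) i j :
  (W *m adjmx W) i j = \sum_l W i l * Num.conj (W j l).
Proof. by rewrite mxE; apply: eq_bigr => l _; rewrite !mxE. Qed.

Lemma gram_ii n k (W : 'M[C]_(n, k)) i :
  (W *m adjmx W) i i = (\sum_l nrm2 (W i l))%:C.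
Proof. by rewrite gramE sumcR; apply: eq_bigr => l _; rewrite mulJ. Qed.

Lemma gram_Re_ge0 n k (W : 'M[C]_(n, k)) i : 0 <= Re ((W *m adjmx W) i i).
Proof. by rewrite gram_ii cReR; apply: sumr_ge0 => l _; exact: nrm2_ge0. Qed.

Lemma gram_cs n k (W : 'M[C]_(n, k)) i j :
  nrm2 ((W *m adjmx W) i j) <= Re ((W *m adjmx W) i i) * Re ((W *m adjmx W) j j).
Proof. by rewrite gramE !gram_ii !cReR; apply: cs. Qed.

Lemma realC_eq (z : C) : z \is Num.real -> z = (Re z)%:C.
Proof.
move=> /conj_Creal hz; apply: ceqP => //=.
have := congr1 (@complex.Im R) hz; rewrite cImJ => h; lra.
Qed.


Lemma adj_tc m k (M : 'M[C]_(m, k)) : adjmx M = (M ^t* )%sesqui.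
Proof. by apply/matrixP => i j; rewrite !mxE. Qed.

Lemma herm_diag n (A : 'M[C]_n) : adjmx A = A ->
  exists U : 'M[C]_n, exists a : 'I_n -> R,
   [/\ U *m adjmx U = 1%:M, adjmx U *m U = 1%:M &
       U *m A *m adjmx U = diag_mx (\row_i (a i)%:C)].
Proof.
move=> hA.
have hH : A \is hermsymmx.
  by apply/is_hermitianmxP; rewrite expr0 scale1r -adj_tc hA.
have /orthomx_spectralP hE := hermitian_normalmx hH.
have hU := spectral_unitarymx A.
have hR := hermitian_spectral_diag_real hH.
set U := spectralmx A in hE hU *; set d := spectral_diag A in hE hR *.
have U1 : U *m adjmx U = 1%:M by rewrite adj_tc; apply/unitarymxP.
have U2 : adjmx U *m U = 1%:M by apply: mulmx1C.
exists U, (fun i => Re (d 0 i)); split => //.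
rewrite {1}hE invmx_unitary // -adj_tc !mulmxA U1 mul1mx -mulmxA U1 mulmx1.
apply/matrixP => i j; rewrite !mxE; case: (i == j) => //=.
by rewrite mulr1n -realC_eq //; apply: (mxOverP hR).
Qed.


Definition dgR n (a : 'I_n -> R) : 'M[C]_n := diag_mx (\row_i (a i)%:C).

Lemma dgR_adj n (a : 'I_n -> R) : adjmx (dgR a) = dgR a.
Proof.
apply/matrixP => i j; rewrite !mxE; have [->|hij] := eqVneq i j.
  by rewrite !mulr1n; apply: ceqP; rewrite ?cReJ ?cImJ //= oppr0.
by rewrite !mulr0n rmorph0.
Qed.

Lemma dgR_mul n (a b : 'I_n -> R) : dgR a *m dgR b = dgR (fun i => a i * b i).
Proof.
rewrite /dgR mulmx_diag; congr diag_mx; apply/rowP => i; rewrite !mxE.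
by rewrite mulcR.
Qed.

Lemma quad_dgR n (w : 'rV[C]_n) (a : 'I_n -> R) :
  (w *m dgR a *m adjmx w) 0 0 = (\sum_l a l * nrm2 (w 0 l))%:C.
Proof.
rewrite mxE sumcR; apply: eq_bigr => l _.
rewrite /dgR mul_mx_diag !mxE -mulrA (mulrC _ (Num.conj _)) mulrA mulJ mulcR mulrC.
done.
Qed.

Lemma psd_sqrt n (M : 'M[C]_n) : psdmx M -> exists X, psdmx X /\ X *m X = M.
Proof.
move=> [hA hq].
have [U [a [U1 U2 hD]]] := herm_diag hA.
rewrite -/(dgR a) in hD.
have hM : M = adjmx U *m dgR a *m U.
  by rewrite -hD !mulmxA U2 mul1mx -mulmxA U2 mulmx1.
have a0 i : 0 <= a i.
  have := hq (delta_mx 0 i *m U).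
  rewrite adjmxM !mulmxA -(mulmxA _ U) -(mulmxA _ _ (adjmx U)) hD.
  rewrite quad_dgR.
  rewrite (bigD1 i) //= big1 ?addr0; last first.
    by move=> j hj; rewrite mxE (negbTE hj) /= /nrm2 cRe0 cIm0 expr2 mulr0 addr0 mulr0.
  by rewrite mxE !eqxx /nrm2 /= expr1n expr2 mulr0 addr0 mulr1 lecR.
pose S := dgR (fun i => Num.sqrt (a i)).
exists (adjmx U *m S *m U); split; last first.
  rewrite hM -!mulmxA (mulmxA U) U1 mul1mx !mulmxA -(mulmxA _ S S) /S dgR_mul.
  by congr (_ *m _ *m _); congr dgR; apply: funext => i; rewrite -expr2 sqr_sqrtr.
split.
  by rewrite !adjmxM adjmxK dgR_adj mulmxA.
move=> v.
have -> : v *m (adjmx U *m S *m U) *m adjmx v =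
    (v *m adjmx U) *m S *m adjmx (v *m adjmx U).
  by rewrite adjmxM adjmxK !mulmxA.
rewrite quad_dgR lecR'; apply: sumr_ge0 => l _.
by apply: mulr_ge0; [exact: sqrtr_ge0 | exact: nrm2_ge0].
Qed.


Lemma frob_tr n (M : 'M[C]_n) : frob M = Re (\tr (adjmx M *m M)).
Proof. by rewrite tr_adjM ipmxx. Qed.

Lemma dg_conj n (b c : 'I_n -> R) (M : 'M[C]_n) :
  dgR b *m M *m dgR c = \matrix_(i, j) ((b i)%:C * M i j * (c j)%:C).
Proof.
apply/matrixP => i j; rewrite /dgR mul_mx_diag mul_diag_mx !mxE.
done.
Qed.

Lemma tr_dgR n (a : 'I_n -> R) : \tr (dgR a) = (\sum_i a i)%:C.
Proof. by rewrite /mxtrace sumcR; apply: eq_bigr => i _; rewrite !mxE eqxx mulr1n. Qed.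

Lemma sum2_prod n (f g : 'I_n -> R) :
  \sum_i \sum_j (f i * g j) = (\sum_i f i) * (\sum_j g j).
Proof. by rewrite mulr_suml; apply: eq_bigr => i _; rewrite mulr_sumr. Qed.

Lemma nrm2_0 : nrm2 0 = 0.
Proof. by rewrite /nrm2 cRe0 cIm0 expr2 mulr0 addr0. Qed.

Lemma core n (a : 'I_n -> R) (W P : 'M[C]_n) :
  \sum_i a i ^+ 2 = 1 -> \sum_i Re ((W *m adjmx W) i i) = 1 ->
  adjmx P = P -> P *m P = dgR a *m (W *m adjmx W) *m dgR a ->
  4 * (Re (\tr P)) ^+ 2 <= 4 - frob (dgR a *m dgR a - W *m adjmx W).
Proof.
set sg := W *m adjmx W => ha hs hP hPP.
pose pi i := a i * (a i)^-1.
have pi01 i : (a i == 0 -> pi i = 0) /\ (a i != 0 -> pi i = 1).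
  by split => h; rewrite /pi; [rewrite (eqP h) mul0r | rewrite mulfV].
have pi2 i : pi i * pi i = pi i.
  by have [h|h] := eqVneq (a i) 0; [rewrite (pi01 i).1 ?h ?mulr0 | rewrite (pi01 i).2 ?h ?mulr1].
pose s i := Re (sg i i).
have s0 i : 0 <= s i by exact: gram_Re_ge0.
pose t := \sum_i pi i * s i.
have t1 : t <= 1.
  rewrite -hs; apply: ler_sum => i _; rewrite -[leRHS]mul1r ler_wpM2r //.
  by have [h|h] := eqVneq (a i) 0; [rewrite (pi01 i).1 ?h | rewrite (pi01 i).2 ?h].
pose Dinv := dgR (fun i => (a i)^-1).
pose X := dgR a; pose Y := P *m Dinv.
pose Sp : 'M[C]_n := \matrix_(i, j) ((pi i * pi j)%:C * sg i j).
have hXX : adjmx X *m X = dgR a *m dgR a by rewrite /X dgR_adj.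
have hYY : adjmx Y *m Y = Sp.
  rewrite /Y adjmxM hP /Dinv dgR_adj !mulmxA -(mulmxA _ P P) hPP !mulmxA.
  rewrite dgR_mul -(mulmxA _ (dgR a) (dgR _)) dgR_mul -(mulmxA _ W (adjmx W)) dg_conj.
  apply/matrixP => i j; rewrite !mxE.
  by rewrite mulrAC mulcR /pi (mulrC (a i)^-1).
have fX : frob X = 1.
  by rewrite frob_tr hXX dgR_mul tr_dgR cReR -ha; apply: eq_bigr => i _; rewrite expr2.
have fY : frob Y = t.
  rewrite frob_tr hYY /mxtrace cRe_sum; apply: eq_bigr => i _.
  by rewrite mxE cReM cReR cImR mul0r subr0 pi2.
have RePii i : a i = 0 -> Re (P i i) = 0.
  move=> hai.
  have h0 : (P *m adjmx P) i i = 0.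
    by rewrite hP hPP dg_conj mxE hai (_ : (0 : R)%:C = 0 :> C) // mulr0.
  rewrite gram_ii in h0.
  have {h0} h0 : \sum_l nrm2 (P i l) = 0 by rewrite -[LHS]cReR h0.
  have /psumr_eq0P h1 := h0.
  have h2 : nrm2 (P i i) = 0 by apply: h1 => // j _; exact: nrm2_ge0.
  move: h2; rewrite /nrm2 => h2.
  have : Re (P i i) ^+ 2 = 0.
    by move: (sqr_ge0 (Im (P i i))) (sqr_ge0 (Re (P i i))); lra.
  by move/eqP; rewrite sqrf_eq0 => /eqP.
have hc : ipm X Y = Re (\tr P).
  rewrite -tr_adjM /X dgR_adj /Y /Dinv mulmxA mxtrace_mulC mulmxA dgR_mul.
  rewrite /mxtrace !cRe_sum; apply: eq_bigr => i _.
  rewrite mul_diag_mx !mxE cReM cReR cImR mul0r subr0 (mulrC (a i)^-1) -/(pi i).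
  have [h|h] := eqVneq (a i) 0.
    by rewrite (pi01 i).1 ?h // RePii ?mul0r // (eqP h).
  by rewrite (pi01 i).2 ?h ?mul1r.
have key := frob_gram_diff X Y.
rewrite hXX hYY fX fY hc in key.
have blk : frob (dgR a *m dgR a - sg) <= frob (dgR a *m dgR a - Sp) + (1 - t ^+ 2).
  have -> : 1 - t ^+ 2 = \sum_i \sum_j ((s i * s j) - (pi i * s i) * (pi j * s j)).
    rewrite -(expr1n _ 2) -hs expr2 -sum2_prod expr2 -sum2_prod -sumrB.
    by apply: eq_bigr => i _; rewrite sumrB.
  rewrite /frob -big_split /=; apply: ler_sum => i _.
  rewrite -big_split /=; apply: ler_sum => j _.
  have hcs := gram_cs W i j.
  rewrite -/sg in hcs *; clearbody sg.
  rewrite dgR_mul !mxE.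
  have [hij|hij] := boolP ((a i != 0) && (a j != 0)).
    case/andP: hij => hi hj.
    by rewrite (pi01 i).2 // (pi01 j).2 // !mul1r subrr addr0.
  have hD : (a i * a i)%:C *+ (i == j) = 0 :> C.
    have [eij|nij] := eqVneq i j; last by rewrite mulr0n.
    rewrite -eij andbb negbK in hij.
    by rewrite (eqP hij) mulr0 mulr1n (_ : (0:R)%:C = 0 :> C).
  have hpp : pi i * pi j = 0.
    move: hij; rewrite negb_and !negbK => /orP[h|h].
      by rewrite (pi01 i).1 // mul0r.
    by rewrite (pi01 j).1 // mulr0.
  rewrite hD hpp mul0r sub0r subrr nrm2_0 add0r nrm2N.
  rewrite mulrACA hpp mul0r subr0.
  exact: hcs.
move: key blk.
set h := frob (dgR a *m dgR a - sg); set h2 := frob (dgR a *m dgR a - Sp).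
set c := Re (\tr P).
clearbody h h2 c t => key blk.
nra.
Qed.


Lemma sqrtmxP n (M : 'M[C]_n) : psdmx M ->
  psdmx (sqrtmx M) /\ sqrtmx M *m sqrtmx M = M.
Proof. by move=> hM; rewrite /sqrtmx; apply: (xgetPex 0 (psd_sqrt hM)). Qed.

Lemma psd_conj n (A S : 'M[C]_n) : psdmx S -> adjmx A = A -> psdmx (A *m S *m A).
Proof.
move=> [hS hq] hA; split.
  by rewrite !adjmxM hA hS mulmxA.
move=> v; have := hq (v *m A).
by rewrite adjmxM hA !mulmxA.
Qed.

Lemma tr_conjU n (U M : 'M[C]_n) : adjmx U *m U = 1%:M ->
  \tr (U *m M *m adjmx U) = \tr M.
Proof. by move=> hU; rewrite mxtrace_mulC mulmxA hU mul1mx. Qed.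

Lemma frob_conjU n (U M : 'M[C]_n) : adjmx U *m U = 1%:M ->
  frob (U *m M *m adjmx U) = frob M.
Proof.
move=> hU; rewrite !frob_tr !adjmxM adjmxK !mulmxA.
rewrite -(mulmxA _ (adjmx U) U) hU mulmx1 -!mulmxA mulmxA.
by rewrite mulmxA -(mulmxA U) tr_conjU.
Qed.

Lemma fid_bound n (rho sg : 'M[C]_n) : densitymx rho -> densitymx sg ->
  fidelity rho sg <= 1 - frob (rho - sg) / 4.
Proof.
move=> [hr tr1] [hs ts1].
have [hA hAA] := sqrtmxP hr.
have [hB hBB] := sqrtmxP hs.
set A := sqrtmx rho in hA hAA *; set B := sqrtmx sg in hB hBB.
have hASA := psd_conj hs hA.1.
have [hP hPP] := sqrtmxP hASA.
rewrite /fidelity -/A.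
set P := sqrtmx (A *m sg *m A) in hP hPP *.
have [U [a [U1 U2 hD]]] := herm_diag hA.1.
rewrite -/(dgR a) in hD.
have hc := @core n a (U *m B) (U *m P *m adjmx U).
have e1 : dgR a *m dgR a = U *m rho *m adjmx U.
  by rewrite -hD -!mulmxA (mulmxA (adjmx U)) U2 mul1mx !mulmxA -(mulmxA _ A A) hAA.
have e2 : (U *m B) *m adjmx (U *m B) = U *m sg *m adjmx U.
  by rewrite adjmxM hB.1 !mulmxA -(mulmxA _ B B) hBB.
rewrite e2 in hc.
have ha : \sum_i a i ^+ 2 = 1.
  have := congr1 (fun M => Re (\tr M)) e1; rewrite /= tr_conjU // tr1 dgR_mul tr_dgR.
  by rewrite cReR cRe1 => <-; apply: eq_bigr => i _; rewrite expr2.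
have hs1 : \sum_i Re ((U *m sg *m adjmx U) i i) = 1.
  by rewrite -cRe_sum -/(\tr _) tr_conjU // ts1.
have hP' : adjmx (U *m P *m adjmx U) = U *m P *m adjmx U.
  by rewrite !adjmxM adjmxK hP.1 mulmxA.
have hPP' : (U *m P *m adjmx U) *m (U *m P *m adjmx U) =
    dgR a *m (U *m sg *m adjmx U) *m dgR a.
  rewrite -hD !mulmxA -(mulmxA _ (adjmx U) U) U2 mulmx1 -(mulmxA _ P P) hPP.
  by rewrite -!(mulmxA _ (adjmx U) U) !U2 !mulmx1 !mulmxA.
have := hc ha hs1 hP' hPP'.
rewrite tr_conjU // e1 -mulmxBl -mulmxBr frob_conjU //.
set x := Re (\tr P); set h := frob (rho - sg); clearbody x h.
lra.
Qed.


Lemma dens_gram n (rho : 'M[C]_n) : densitymx rho ->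
  rho = sqrtmx rho *m adjmx (sqrtmx rho).
Proof. by move=> [hr _]; have [[hA _] hAA] := sqrtmxP hr; rewrite hA hAA. Qed.

Lemma dens_diag_ge0 n (rho : 'M[C]_n) i : densitymx rho -> 0 <= Re (rho i i).
Proof. by move=> hd; rewrite (dens_gram hd); exact: gram_Re_ge0. Qed.

Lemma dens_diag_le1 n (rho : 'M[C]_n) i : densitymx rho -> Re (rho i i) <= 1.
Proof.
move=> hd; have [_ tr1] := hd.
have := congr1 (@complex.Re R) tr1; rewrite /mxtrace cRe_sum cRe1 => <-.
rewrite (bigD1 i) //= lerDl; apply: sumr_ge0 => j _; exact: dens_diag_ge0.
Qed.

Lemma dens_bound n (rho : 'M[C]_n) i j : densitymx rho ->
  `|Re (rho i j)| <= 1 /\ `|Im (rho i j)| <= 1.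
Proof.
move=> hd.
have h1 := dens_diag_le1 i hd; have h2 := dens_diag_le1 j hd.
have := gram_cs (sqrtmx rho) i j; rewrite -(dens_gram hd) => hcs.
have g1 := dens_diag_ge0 i hd; have g2 := dens_diag_ge0 j hd.
have hn : nrm2 (rho i j) <= 1.
  apply: le_trans hcs _; rewrite -[1]mulr1; exact: ler_pM.
move: hn; rewrite /nrm2 => hn.
have hr := sqr_ge0 (Re (rho i j)); have hi := sqr_ge0 (Im (rho i j)).
split; rewrite ler_norml; apply/andP; split; nra.
Qed.

End Mat.
End MatM.

Module IntM.
Import numFieldNormedType.Exports.
Local Set Implicit Arguments. Local Unset Strict Implicit.
Section Good.
Context (R : realType) (dT : measure_display) (T : measurableType dT) (P : probability T R).

Definition good (f : T -> R) :=
  measurable_fun setT f /\ exists M : R, forall w, `|f w| <= M.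

Lemma good_int f : good f -> P.-integrable setT (EFin \o f).
Proof.
move=> [mf [M hM]]; apply: measurable_bounded_integrable => //.
  by have := probability_setT P; rewrite /= => ->; rewrite ltry.
exists M; split; first exact: num_real.

by move=> y hy w _; apply: le_trans (hM w) (ltW hy).
Qed.

Lemma good_cst c : good (fun _ => c).
Proof. by split; [exact: measurable_cst | exists `|c|]. Qed.

Lemma good_add f g : good f -> good g -> good (fun w => f w + g w).
Proof.
move=> [mf [M hM]] [mg [N hN]]; split; first exact: measurable_realfun.measurable_funD.
by exists (M + N) => w; apply: le_trans (ler_normD _ _) (lerD (hM w) (hN w)).
Qed.

Lemma good_opp f : good f -> good (fun w => - f w).
Proof.
move=> [mf [M hM]]; split; first exact: measurableT_comp.
by exists M => w; rewrite normrN.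
Qed.

Lemma good_sub f g : good f -> good g -> good (fun w => f w - g w).
Proof. by move=> hf hg; apply: good_add => //; exact: good_opp. Qed.

Lemma good_mul f g : good f -> good g -> good (fun w => f w * g w).
Proof.
move=> [mf [M hM]] [mg [N hN]]; split; first exact: measurable_realfun.measurable_funM.
exists (M * N) => w; rewrite normrM; apply: ler_pM => //.
Qed.

Lemma good_sum I (s : seq I) (F : I -> T -> R) : (forall i, good (F i)) ->
  good (fun w => \sum_(i <- s) F i w).
Proof.
move=> hF; elim: s => [|i s IH].
  by under eq_fun do rewrite big_nil; exact: good_cst.
by under eq_fun do rewrite big_cons; exact: good_add.
Qed.

Lemma RintD f g : good f -> good g ->
  Rintegral P setT (fun w => f w + g w) = Rintegral P setT f + Rintegral P setT g.
Proof. by move=> hf hg; rewrite RintegralD //; exact: good_int. Qed.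

Lemma RintB f g : good f -> good g ->
  Rintegral P setT (fun w => f w - g w) = Rintegral P setT f - Rintegral P setT g.
Proof. by move=> hf hg; rewrite RintegralB //; exact: good_int. Qed.

Lemma RintZ c f : good f ->
  Rintegral P setT (fun w => c * f w) = c * Rintegral P setT f.
Proof. by move=> hf; rewrite RintegralZl //; exact: good_int. Qed.

Lemma Rint_cst c : Rintegral P setT (fun _ => c) = c.
Proof. by rewrite Rintegral_cst //; have := probability_setT P; rewrite /= => ->; rewrite mulr1. Qed.

Lemma Rint_sum I (s : seq I) (F : I -> T -> R) : (forall i, good (F i)) ->
  Rintegral P setT (fun w => \sum_(i <- s) F i w) = \sum_(i <- s) Rintegral P setT (F i).
Proof.
move=> hF; elim: s => [|i s IH].
  by under eq_Rintegral do rewrite big_nil; rewrite big_nil Rint_cst.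
under eq_Rintegral do rewrite big_cons.
by rewrite RintD ?IH ?big_cons //; exact: good_sum.
Qed.

Lemma Rint_var f c : good f ->
  Rintegral P setT (fun w => f w ^+ 2) - (Rintegral P setT f) ^+ 2 <=
  Rintegral P setT (fun w => (f w - c) ^+ 2).
Proof.
move=> hf.
have e : (fun w => (f w - c) ^+ 2) = (fun w => (f w ^+ 2 - (2 * c) * f w) + c ^+ 2).
  by apply: funext => w; ring.
have g2 : good (fun w => f w ^+ 2) by under eq_fun do rewrite expr2; exact: good_mul.
have gl : good (fun w => f w ^+ 2 - 2 * c * f w).
  by apply: good_sub => //; apply: good_mul => //; exact: good_cst.
rewrite e RintD ?RintB ?RintZ ?Rint_cst //; last exact: good_cst.
- set X := Rintegral P setT f; set Y := Rintegral P setT _.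
  by have := sqr_ge0 (X - c); clearbody X Y; nra.
- exact: good_cst.
- by apply: good_mul => //; exact: good_cst.
Qed.

Lemma ge0_le_integral_nm (f g : T -> \bar R) :
  (forall x, (0 <= f x)%E) -> (forall x, (f x <= g x)%E) ->
  (\int[P]_(x in setT) f x <= \int[P]_(x in setT) g x)%E.
Proof.
move=> f0 fg.
have g0 x : (0 <= g x)%E by apply: le_trans (fg x).
rewrite !ge0_integralTE//.
apply: le_ereal_sup => _ [h hf <-]; exists h => //= x; exact: le_trans (hf x) (fg x).
Qed.

Lemma Rint_le_nm (f g : T -> R) : good g -> (forall w, 0 <= f w) -> (forall w, f w <= g w) ->
  Rintegral P setT f <= Rintegral P setT g.
Proof.
move=> hg f0 fg.
have hgi := good_int hg.
have ig : (\int[P]_(x in setT) (g x)%:E)%E \is a fin_num by exact: integrable_fin_num.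
have hle : (\int[P]_(x in setT) (f x)%:E <= \int[P]_(x in setT) (g x)%:E)%E.
  by apply: ge0_le_integral_nm => x; rewrite lee_fin.
have hge : (0 <= \int[P]_(x in setT) (f x)%:E)%E.
  by apply: integral_ge0 => x _; rewrite lee_fin.
have fi : (\int[P]_(x in setT) (f x)%:E)%E \is a fin_num.
  rewrite ge0_fin_numE //; apply: (le_lt_trans hle).
  by rewrite -ge0_fin_numE // (le_trans hge hle).
exact: fine_le.
Qed.

End Good.
End IntM.

Import MatM IntM.

Theorem theorem2 (R : realType) (d : nat) (hd : (1 <= d)%N)
  (dT : measure_display) (T : measurableType dT) (P : probability T R)
  (rho : T -> 'M[R[i]]_d) (hrho : random_density rho) :
  forall sigma : 'M[R[i]]_d, densitymx sigma ->
    Rintegral P setT (fun w => fidelity (rho w) sigma)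
    <= 1 - 4^-1 * complex.Re (\tr (Emx P (fun w => rho w *m rho w)
                                    - Emx P rho *m Emx P rho)).
Proof.
move=> sg hsg; case: hrho => hden hmeas.
pose x i j w := complex.Re (rho w i j).
pose y i j w := complex.Im (rho w i j).
have gx i j : good (x i j).
  split; first exact: (hmeas i j).1.
  by exists 1 => w; exact: (dens_bound i j (hden w)).1.
have gy i j : good (y i j).
  split; first exact: (hmeas i j).2.
  by exists 1 => w; exact: (dens_bound i j (hden w)).2.
pose p i j := complex.Re (sg i j).
pose q i j := complex.Im (sg i j).
pose S w := \sum_i \sum_j ((x i j w - p i j) ^+ 2 + (y i j w - q i j) ^+ 2).
have gsq f : good f -> good (fun w => f w ^+ 2).
  by move=> hf; under eq_fun do rewrite expr2; exact: good_mul.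
have gxp i j : good (fun w => (x i j w - p i j) ^+ 2).
  by apply: gsq; apply: good_sub => //; exact: good_cst.
have gyq i j : good (fun w => (y i j w - q i j) ^+ 2).
  by apply: gsq; apply: good_sub => //; exact: good_cst.
have gS : good S.
  apply: good_sum => i; apply: good_sum => j; exact: good_add.
have hS w : frob (rho w - sg) = S w.
  apply: eq_bigr => i _; apply: eq_bigr => j _.
  by rewrite !mxE /nrm2 cReB cImB.
have step1 : Rintegral P setT (fun w => fidelity (rho w) sg) <=
             Rintegral P setT (fun w => 1 - 4^-1 * S w).
  apply: Rint_le_nm.
  - by apply: good_sub; [exact: good_cst | apply: good_mul => //; exact: good_cst].
  - by move=> w; rewrite /fidelity sqr_ge0.
  - by move=> w; rewrite -hS mulrC; exact: fid_bound.
have step2 : Rintegral P setT (fun w => 1 - 4^-1 * S w) =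
    1 - 4^-1 * \sum_i \sum_j (Rintegral P setT (fun w => (x i j w - p i j) ^+ 2)
                             + Rintegral P setT (fun w => (y i j w - q i j) ^+ 2)).
  rewrite RintB ?Rint_cst ?RintZ //; last 2 first.
  - exact: good_cst.
  - by apply: good_mul => //; exact: good_cst.
  rewrite /S Rint_sum; last by move=> i; apply: good_sum => j; exact: good_add.
  congr (_ - _ * _); apply: eq_bigr => i _.
  rewrite Rint_sum; last by move=> j; exact: good_add.
  by apply: eq_bigr => j _; rewrite RintD.
have hH w i j : rho w j i = Num.conj (rho w i j).
  by rewrite -{1}(hden w).1.1 adjE.
pose X i j := Rintegral P setT (x i j).
pose Y i j := Rintegral P setT (y i j).
have hX i j : X j i = X i j.
  by apply: eq_Rintegral => w _; rewrite /x hH cReJ.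
have hY i j : Y j i = - Y i j.
  rewrite /Y -mulN1r -RintZ //; apply: eq_Rintegral => w _.
  by rewrite /y hH cImJ mulN1r.
have stepC : complex.Re (\tr (Emx P (fun w => rho w *m rho w) - Emx P rho *m Emx P rho)) =
    \sum_i \sum_j ((Rintegral P setT (fun w => x i j w ^+ 2) + Rintegral P setT (fun w => y i j w ^+ 2))
                   - (X i j ^+ 2 + Y i j ^+ 2)).
  rewrite /mxtrace cRe_sum; apply: eq_bigr => i _.
  rewrite mxE [X in _ + X]mxE cReD cReN sumrB; congr (_ - _).
    rewrite mxE /=.
    under eq_Rintegral do rewrite mxE cRe_sum.
    rewrite Rint_sum; last first.
      move=> j; have -> : (fun w => complex.Re (rho w i j * rho w j i)) =
                         (fun w => x i j w * x i j w + y i j w * y i j w).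
        by apply: funext => w; rewrite (hH w i j) cReM cReJ cImJ /x /y; ring.
      by apply: good_add; apply: good_mul.
    apply: eq_bigr => j _; rewrite -RintD; [|exact: gsq|exact: gsq].
    by apply: eq_Rintegral => w _; rewrite (hH w i j) mulJ cReR /nrm2.
  rewrite mxE cRe_sum; apply: eq_bigr => j _.
  rewrite !mxE /= -/(X i j) -/(Y i j) -/(X j i) -/(Y j i) hX hY; ring.
rewrite -/sg in step1 *.
apply: (le_trans step1); rewrite step2 stepC.
suff h : \sum_i \sum_j ((Rintegral P setT (fun w => x i j w ^+ 2) + Rintegral P setT (fun w => y i j w ^+ 2))
                   - (X i j ^+ 2 + Y i j ^+ 2)) <=
         \sum_i \sum_j (Rintegral P setT (fun w => (x i j w - p i j) ^+ 2)
                             + Rintegral P setT (fun w => (y i j w - q i j) ^+ 2)).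
  by move: h; set u := \sum_i _; set v := \sum_i _; clearbody u v => h; lra.
apply: ler_sum => i _; apply: ler_sum => j _.
have h1 := Rint_var P (p i j) (gx i j).
have h2 := Rint_var P (q i j) (gy i j).
rewrite -/(X i j) in h1; rewrite -/(Y i j) in h2.
lra.
Qed.
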